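(* For a directed graph $\vec G$ on $[n]$, let $\vec G_{\mathrm{fwd}}$ be the undirected graph whose edges are the forward edges of $\vec G$. Then: (i) $\mathcal{F}_{\vec G(n,p)}$ has the same distribution as $\mathcal{F}_{G(n,p)}$; (ii) $(\vec G(n,p))_{\mathrm{fwd}}$ has the same distribution as $G(n,p)$; (iii) one can couple $G(n,p)$ and $\vec G(n,p)$ as follows: first sample $G(n,p)$, which gives a depth-first ordering $(v_0,\dots,v_{n-1})$ of $[n]$; then let $\vec G_{\mathrm{fwd}}(n,p)=G(n,p)$ and add to it each of the possible back edges $(v_i,v_j)$, $j<i$, independently with probability $p$.
   Context: $[n]=\{1,\dots,n\}$. $\vec G(n,p)$: each of the $n(n-1)$ directed edges $(i,j)$, $i\ne j$, present independently with probability $p$. $G(n,p)$: each of the $\binom n2$ undirected edges present independently with probability $p$. Depth-first exploration. For a directed graph $\vec G$ (resp. undirected graph $G$) on $[n]$, define inductively for $i=0,\dots,n$ an ordered list $\mathcal O_i$ (open vertices) and a set $\mathcal A_i$ (explored vertices): $\mathcal O_0=(1)$, $\mathcal A_0=\emptyset$. Given $\mathcal O_i,\mathcal A_i$, let $v_i$ be the first element of $\mathcal O_i$, $\mathcal A_{i+1}=\mathcal A_i\cup\{v_i\}$, and $\mathcal N_i$ the set of out-neighbours (resp. neighbours) of $v_i$ not in $\mathcal O_i\cup\mathcal A_i$. $\mathcal O_{i+1}$ is obtained from $\mathcal O_i$ by removing $v_i$ and placing the elements of $\mathcal N_i$ in increasing order at the start (the smallest element of $\mathcal N_i$ becomes first);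 if this gives $\mathcal O_{i+1}=\emptyset$, instead let $\mathcal O_{i+1}$ consist of the smallest element of $[n]\setminus\mathcal A_{i+1}$. The forest $\mathcal F_{\vec G}$ (resp. $\mathcal F_G$) has an edge from $x$ to $y$ iff $x=v_i$ and $y\in\mathcal N_i$ for some $i$. The order $(v_0,\dots,v_{n-1})$ is the depth-first ordering. An edge $(v_i,v_j)$ of $\vec G$ is a forward edge if $i<j$ and a back edge if $j<i$. *)

(* Defs.v *)
(* Vertices [n] = {1..n} are encoded by 'I_n = {0..n-1}
   (vertex k+1 <-> ordinal k); the natural order is preserved. *)
From HB Require Import structures.
From mathcomp Require Import all_boot all_order all_algebra.
Set Implicit Arguments. Unset Strict Implicit. Unset Printing Implicit Defensive.
Import Order.TTheory GRing.Theory Num.Theory.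
Local Open Scope ring_scope.

Section Graphs.
Variable n : nat.
Notation V := ('I_n).

Definition offdiag : {set V * V} := [set e : V * V | e.1 != e.2].
(* An undirected graph on [n]: its edges {i,j} are encoded as pairs (i,j), i < j. *)
Definition upper : {set V * V} := [set e : V * V | (e.1 < e.2)%N].

Definition dadj (D : {set V * V}) (x y : V) : bool := (x, y) \in D.
Definition uadj (G : {set V * V}) (x y : V) : bool := ((x, y) \in G) || ((y, x) \in G).

(* state = (O_i, A_i); one step returns (v_i, N_i) and the next state. *)
Definition dfs_step (adj : V -> V -> bool) (st : seq V * {set V})
  : option (V * seq V) * (seq V * {set V}) :=
  match st.1 with
  | [::] => (None, st)
  | v :: O' =>
      let A' := v |: st.2 in
      let N := [seq y <- enum V | adj v y && (y \notin st.1) && (y \notin st.2)] in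
      let O2 := N ++ O' in
      let O3 := if O2 is [::] then take 1 [seq y <- enum V | y \notin A'] else O2 in
      (Some (v, N), (O3, A'))
  end.

Fixpoint dfs_iter (adj : V -> V -> bool) (k : nat) (st : seq V * {set V})
  : seq (V * seq V) :=
  match k with
  | 0 => [::]
  | k'.+1 =>
      match dfs_step adj st with
      | (Some r, st') => r :: dfs_iter adj k' st'
      | (None, _) => [::]
      end
  end.

Definition dfs_trace (adj : V -> V -> bool) : seq (V * seq V) :=
  dfs_iter adj n (take 1 (enum V), set0).

Definition dfs_order (adj : V -> V -> bool) : seq V := map fst (dfs_trace adj).

Definition dfs_forest (adj : V -> V -> bool) : {set V * V} :=
  [set e : V * V | has (fun r : V * seq V => (r.1 == e.1) && (e.2 \in r.2)) (dfs_trace adj)].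

Definition forestD (D : {set V * V}) := dfs_forest (dadj D).
Definition forestU (G : {set V * V}) := dfs_forest (uadj G).

Definition fwd (D : {set V * V}) : {set V * V} :=
  let ord := dfs_order (dadj D) in
  [set e : V * V in upper |
     (((e.1, e.2) \in D) && (index e.1 ord < index e.2 ord)%N)
  || (((e.2, e.1) \in D) && (index e.2 ord < index e.1 ord)%N)].

Variable R : realFieldType.
Variable p : R.

Definition dlaw (D : {set V * V}) : R :=
  if D \subset offdiag then
    \prod_(e in offdiag) (if e \in D then p else 1 - p)
  else 0.

Definition ulaw (G : {set V * V}) : R :=
  if G \subset upper then
    \prod_(e in upper) (if e \in G then p else 1 - p)
  else 0.

Definition backs (G : {set V * V}) : {set V * V} :=
  let ord := dfs_order (uadj G) in [set e : V * V | (index e.2 ord < index e.1 ord)%N].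

Definition orient (G : {set V * V}) : {set V * V} :=
  let ord := dfs_order (uadj G) in
  [set e : V * V | uadj G e.1 e.2 && (index e.1 ord < index e.2 ord)%N].

Definition coupled (G B : {set V * V}) : {set V * V} := orient G :|: B.

Definition bweight (G B : {set V * V}) : R :=
  \prod_(e in backs G) (if e \in B then p else 1 - p).

End Graphs.

(* Main.v *)
Require Import Defs.
From HB Require Import structures.
From mathcomp Require Import all_boot all_order all_algebra.
Import Order.TTheory GRing.Theory Num.Theory.
Set Implicit Arguments. Unset Strict Implicit. Unset Printing Implicit Defensive.

Lemma iter_agree n (adj1 adj2 : 'I_n -> 'I_n -> bool) k (st : seq 'I_n * {set 'I_n}) :
  (forall x y, y \notin st.2 ->
     (index x (map fst (dfs_iter adj1 k st)) < index y (map fst (dfs_iter adj1 k st)))%N ->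
     adj1 x y = adj2 x y) ->
  dfs_iter adj2 k st = dfs_iter adj1 k st.
Proof.
elim: k st => [|k IH] [O A] //= H.
case: O H => [|v O'] H //=.
set N1 := [seq y <- _ | adj1 v y && _ & _].
set N2 := [seq y <- _ | adj2 v y && _ & _].
have EN : N2 = N1.
  apply: eq_filter => y.
  case Hy: (y \notin v :: O'); case Hy2: (y \notin A); rewrite ?andbF //= !andbT.
  symmetry; apply: H => //=.
  rewrite eqxx /=.
  move: Hy; rewrite inE negb_or => /andP[Hyv _].
  by rewrite eq_sym (negbTE Hyv).
rewrite EN; congr (_ :: _).
apply: IH => x y /=.
rewrite in_setU1 negb_or => /andP[Hyv HyA] Hlt.
apply: H => //=.
rewrite [v == y]eq_sym (negbTE Hyv) -/N1.
by case: (v == x).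
Qed.

Definition dinv n (st : seq 'I_n * {set 'I_n}) :=
  [/\ uniq st.1, (forall x, x \in st.1 -> x \notin st.2) & (st.1 = [::] -> forall x, x \in st.2)].

Lemma iter_cover n (adj : 'I_n -> 'I_n -> bool) k (st : seq 'I_n * {set 'I_n}) :
  dinv st -> (#|~: st.2| <= k)%N -> forall x, x \notin st.2 -> x \in map fst (dfs_iter adj k st).
Proof.
elim: k st => [|k IH] [O A] [/= HU HD HE] Hc x Hx.
  exfalso. move: Hc; rewrite leqn0 cards_eq0 => /eqP/setP/(_ x).
  by rewrite !inE Hx.
case: O HU HD HE => [|v O'] HU HD HE.
  by move: (HE erefl x); rewrite (negbTE Hx).
rewrite /=.
rewrite in_cons; case: (eqVneq x v) => [//|Hxv] /=.
apply: IH => /=.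
- move: HU => /= /andP[HvO HUO].
  set N := [seq y <- _ | _ & _].
  have HN : forall y, y \in N -> [&& y \notin v :: O' & y \notin A].
    by move=> y; rewrite mem_filter => /andP[/andP[/andP[_ ->] ->] _].
  split.
  + case E: (N ++ O') => [|a l].
      by apply: take_uniq; apply: filter_uniq; apply: enum_uniq.
    rewrite -E cat_uniq HUO filter_uniq ?enum_uniq //= andbT.
    apply/hasPn => y /= Hy; apply/negP => HyN.
    by move: (HN y HyN); rewrite inE Hy orbT.
  + move=> y.
    case E: (N ++ O') => [|a l].
      by move/mem_take; rewrite mem_filter => /andP[].
    rewrite -E mem_cat => /orP[HyN|HyO]; rewrite in_setU1 negb_or.
      by move: (HN y HyN); rewrite inE negb_or => /andP[/andP[-> _] ->].
    apply/andP; split; last by apply: HD; rewrite inE HyO orbT.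
    by apply/eqP=> Hyv; move: HvO; rewrite -Hyv HyO.
  + case E: (N ++ O') => [|a l] //.
    case E2: [seq y <- enum 'I_n | y \notin v |: A] => [|b l2] //= _ y.
    apply/negPn/negP => Hy.
    have : y \in [seq y <- enum 'I_n | y \notin v |: A] by rewrite mem_filter Hy mem_enum.
    by rewrite E2.
- have HvA : v \notin A by apply: HD; rewrite inE eqxx.
  move: Hc; rewrite setCU (cardsD1 v) in_setC HvA /= add1n ltnS.
  apply: leq_trans; apply: subset_leq_card.
  by apply/subsetP => y; rewrite !inE.
- by rewrite in_setU1 negb_or Hxv Hx.
Qed.

Lemma trace_cover n (adj : 'I_n -> 'I_n -> bool) (x : 'I_n) : x \in dfs_order adj.
Proof.
apply: iter_cover => /=; last (by rewrite inE); last by rewrite setC0 cardsT card_ord.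
split.
- by apply: take_uniq; apply: enum_uniq.
- by move=> y; rewrite inE.
- move=> /= E y; exfalso.
  have : y \in enum 'I_n by rewrite mem_enum.
  by case: (enum 'I_n) E.
Qed.

Lemma trace_coupled n (G B : {set 'I_n * 'I_n}) :
  B \subset backs G -> dfs_trace (dadj (coupled G B)) = dfs_trace (uadj G).
Proof.
move=> sB; apply: iter_agree => x y _ Hlt.
have Hlt' : (index x (dfs_order (uadj G)) < index y (dfs_order (uadj G)))%N := Hlt.
rewrite /dadj /coupled in_setU /orient inE /= Hlt' andbT.
case HB: ((x, y) \in B); rewrite ?orbF ?orbT //.
move/subsetP: sB => /(_ _ HB); rewrite /backs inE /= => H.
by have := ltn_trans Hlt' H; rewrite ltnn.
Qed.

Lemma trace_fwd n (D : {set 'I_n * 'I_n}) :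
  dfs_trace (uadj (fwd D)) = dfs_trace (dadj D).
Proof.
apply: iter_agree => x y _ Hlt.
have Hlt' : (index x (dfs_order (dadj D)) < index y (dfs_order (dadj D)))%N := Hlt.
have Hgt : (index y (dfs_order (dadj D)) < index x (dfs_order (dadj D)))%N = false.
  by rewrite ltnNge (ltnW Hlt').
rewrite /uadj /fwd !inE /= Hlt' Hgt /dadj !andbT !andbF ?orbF.
case: (ltngtP x y) => Exy /=; rewrite ?orbF //.
by move: Hlt'; rewrite (val_inj Exy) ltnn.
Qed.

Lemma idx_inj n (adj : 'I_n -> 'I_n -> bool) (x y : 'I_n) :
  index x (dfs_order adj) = index y (dfs_order adj) -> x = y.
Proof. by move=> E; apply: (@index_inj _ x _ x y (trace_cover _ _) (trace_cover _ _) E). Qed.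

Lemma fwd_coupled n (G B : {set 'I_n * 'I_n}) :
  G \subset upper n -> B \subset backs G -> fwd (coupled G B) = G.
Proof.
move=> sG sB.
have Eo : dfs_order (dadj (coupled G B)) = dfs_order (uadj G) by rewrite /dfs_order trace_coupled.
apply/setP => [[x y]].
rewrite /fwd Eo !inE /=.
set o := dfs_order (uadj G).
have HGu : forall a b, (a,b) \in G -> (a < b)%N by move=> a b /(subsetP sG); rewrite inE.
have HBb : forall a b, (a,b) \in B -> (index b o < index a o)%N
  by move=> a b /(subsetP sB); rewrite inE.
case: (ltnP x y) => Hxy /=; last first.
  by apply/esym/negP => /HGu; rewrite ltnNge Hxy.
have Hne : index x o != index y o.
  by apply/eqP => /idx_inj E; move: Hxy; rewrite E ltnn.
have HyxG : ((y,x) \in G) = false by apply/negP => /HGu; rewrite ltnNge ltnW.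
rewrite /uadj HyxG.
case: (ltngtP (index x o) (index y o)) => Hi; last by rewrite Hi eqxx in Hne.
- have -> : ((x,y) \in B) = false by apply/negP => /HBb; rewrite ltnNge ltnW.
  by rewrite !andbT !andbF !orbF.
- have -> : ((y,x) \in B) = false by apply/negP => /HBb; rewrite ltnNge ltnW.
  by rewrite !andbT !andbF !orbF.
Qed.

Lemma uadj_fwd n (D : {set 'I_n * 'I_n}) x y :
  (index x (dfs_order (dadj D)) < index y (dfs_order (dadj D)))%N ->
  uadj (fwd D) x y = ((x, y) \in D).
Proof.
move=> Hlt'.
have Hgt : (index y (dfs_order (dadj D)) < index x (dfs_order (dadj D)))%N = false.
  by rewrite ltnNge (ltnW Hlt').
rewrite /uadj /fwd !inE /= Hlt' Hgt !andbT !andbF ?orbF.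
case: (ltngtP x y) => Exy /=; rewrite ?orbF //.
by move: Hlt'; rewrite (val_inj Exy) ltnn.
Qed.

Lemma order_fwd n (D : {set 'I_n * 'I_n}) :
  dfs_order (uadj (fwd D)) = dfs_order (dadj D).
Proof. by rewrite /dfs_order trace_fwd. Qed.

Lemma coupled_fwd n (D : {set 'I_n * 'I_n}) :
  D \subset offdiag n -> coupled (fwd D) (D :&: backs (fwd D)) = D.
Proof.
move=> sD; apply/setP => [[x y]].
rewrite /coupled /orient /backs !inE /= order_fwd.
set o := dfs_order (dadj D).
case: (ltngtP (index x o) (index y o)) => Hi.
- by rewrite andbT andbF orbF; apply: uadj_fwd.
- by rewrite andbF andbT.
- rewrite !andbF /=.
  have Exy := idx_inj Hi; subst y.
  by apply/esym/negP => /(subsetP sD); rewrite inE eqxx.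
Qed.

Lemma coupled_offdiag n (G B : {set 'I_n * 'I_n}) :
  B \subset backs G -> coupled G B \subset offdiag n.
Proof.
move=> sB; apply/subsetP => [[x y]]; rewrite /coupled in_setU /orient !inE /=.
case/orP => [/andP[_ H]|/(subsetP sB)]; last rewrite inE /=.
  by apply/eqP => Exy; subst y; rewrite ltnn in H.
by move=> H; apply/eqP => Exy; subst y; rewrite ltnn in H.
Qed.

Local Open Scope ring_scope.

Lemma sum_subsets (R : comNzRingType) (T : finType) (S : {set T}) (p : R) :
  \sum_(B : {set T} | B \subset S) \prod_(e in S) (if e \in B then p else 1 - p) = 1.
Proof.
pose F := fun (e : T) (b : bool) =>
  if e \in S then (if b then p else 1 - p) else (if b then 0 else 1 : R).
have H1 : \prod_(e : T) \sum_(b : bool) F e b = 1.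
  rewrite big1 // => e _; rewrite big_bool /F; case: (e \in S) => /=.
    by rewrite addrC subrK.
  by rewrite add0r.
rewrite -[RHS]H1 bigA_distr_bigA.
rewrite (reindex (fun B : {set T} => finfun_of_set B)) /=; last first.
  by apply: onW_bij; exists (@FinSet T) => [[f]|f].
rewrite big_mkcond; apply: eq_bigr => B _.
have HB : forall e, finfun_of_set B e = (e \in B) by move=> e; rewrite /in_mem /= pred_of_set.unlock.
case: (boolP (B \subset S)) => sB.
  rewrite big_mkcond; apply: eq_bigr => e _; rewrite /F HB.
  case: (boolP (e \in S)) => // eS.
  have eB : e \notin B by apply: contra eS; apply: (subsetP sB).
  by rewrite (negbTE eB).
case/subsetPn: sB => e eB eS.
by rewrite (bigD1 e) //= /F HB eB (negbTE eS) mul0r.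
Qed.

Lemma prod_offdiag (R : comNzRingType) n (F : 'I_n * 'I_n -> R) :
  \prod_(e in offdiag n) F e = \prod_(e in upper n) (F e * F (e.2, e.1)).
Proof.
rewrite big_split /= (bigID (fun e : 'I_n * 'I_n => (e.1 < e.2)%N)) /=.
congr (_ * _).
  apply: eq_bigl => [[x y]]; rewrite !inE /=.
  case: (ltngtP x y) => E; rewrite ?andbF ?andbT //; apply/eqP => Exy; subst y; by rewrite ltnn in E.
have inj_sw : injective (fun e : 'I_n * 'I_n => (e.2, e.1)) by move=> [a b] [c d] /= [-> ->].
rewrite (reindex_inj inj_sw) /=.
apply: eq_bigl => [[x y]]; rewrite !inE /=.
case: (ltngtP x y) => E /=.
- by rewrite andbT; apply/eqP => Exy; subst y; by rewrite ltnn in E.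
- by rewrite andbF.
- by rewrite andbT; apply/negbTE; rewrite negbK; apply/eqP/val_inj; rewrite /= E.
Qed.

Lemma law_split (R : realFieldType) n (p : R) (D : {set 'I_n * 'I_n}) :
  D \subset offdiag n ->
  ulaw p (fwd D) * bweight p (fwd D) (D :&: backs (fwd D)) = dlaw p D.
Proof.
move=> sD.
have sF : fwd D \subset upper n by apply/subsetP => e; rewrite inE => /andP[].
have sBk : backs (fwd D) \subset offdiag n.
  apply/subsetP => [[x y]]; rewrite !inE /= => H.
  by apply/eqP => Exy; subst y; rewrite ltnn in H.
rewrite /ulaw /dlaw sF sD.
have -> : bweight p (fwd D) (D :&: backs (fwd D)) = \prod_(e in offdiag n)
    (if e \in backs (fwd D) then (if e \in D then p else 1 - p) else 1).
  rewrite /bweight big_mkcond [RHS]big_mkcond; apply: eq_bigr => e _.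
  case: (boolP (e \in backs (fwd D))) => eb; last by case: (e \in offdiag n).
  by rewrite (subsetP sBk _ eb) inE eb andbT.
rewrite !prod_offdiag -big_split /=; apply: eq_bigr => [[x y]]; rewrite inE /= => Hxy.
rewrite /backs order_fwd /fwd !inE /= Hxy.
have Hyx : (y < x)%N = false by rewrite ltnNge ltnW.
rewrite /=.
set o := dfs_order (dadj D).
case: (ltngtP (index x o) (index y o)) => Hi /=.
- by rewrite !andbT !andbF !orbF mul1r.
- by rewrite !andbT !andbF /= mulr1 mulrC.
- by have := idx_inj Hi => Exy; subst y; rewrite ltnn in Hxy.
Qed.

Lemma coupled_back n (G B : {set 'I_n * 'I_n}) :
  B \subset backs G -> coupled G B :&: backs G = B.
Proof.
move=> sB; apply/setP => [[x y]]; rewrite /coupled /orient !inE /=.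
case HB: ((x, y) \in B).
  by move/(subsetP sB): HB; rewrite inE /= => ->; rewrite orbT.
rewrite orbF; apply/negP => /andP[/andP[_ H1] H2].
by have := ltn_trans H1 H2; rewrite ltnn.
Qed.

Lemma part_b (R : realFieldType) n (p : R) (D0 : {set 'I_n * 'I_n}) :
  \sum_(G : {set 'I_n * 'I_n})
     \sum_(B : {set 'I_n * 'I_n} | (B \subset backs G) && (coupled G B == D0))
        ulaw p G * bweight p G B = dlaw p D0.
Proof.
case: (boolP (D0 \subset offdiag n)) => sD; last first.
  rewrite /dlaw (negbTE sD) big1 // => G _; rewrite big1 // => B /andP[sB /eqP E].
  by exfalso; move: sD; rewrite -E coupled_offdiag.
rewrite (bigD1 (fwd D0)) //= [X in _ + X]big1 ?addr0; last first.
  move=> G HG; rewrite big1 // => B /andP[sB /eqP E].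
  case: (boolP (G \subset upper n)) => sG; last by rewrite /ulaw (negbTE sG) mul0r.
  by exfalso; move/eqP: HG; apply; rewrite -E fwd_coupled.
rewrite (bigD1 (D0 :&: backs (fwd D0))) /=; last first.
  by rewrite subsetIr coupled_fwd // eqxx.
rewrite big1 ?addr0; first exact: law_split.
move=> B /andP[/andP[sB /eqP E] HB].
exfalso; move/eqP: HB; apply.
by have := coupled_back sB; rewrite E => ->.
Qed.

Lemma transfer (R : realFieldType) n (p : R) (Q : pred {set 'I_n * 'I_n}) :
  \sum_(D | Q D) dlaw p D =
  \sum_(G : {set 'I_n * 'I_n}) \sum_(B : {set 'I_n * 'I_n} | B \subset backs G)
     (if Q (coupled G B) then ulaw p G * bweight p G B else 0).
Proof.
rewrite big_mkcond /=.
transitivity (\sum_(D : {set 'I_n * 'I_n}) \sum_(G : {set 'I_n * 'I_n})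
   \sum_(B : {set 'I_n * 'I_n} | B \subset backs G)
     (if (coupled G B == D) && Q D then ulaw p G * bweight p G B else 0)).
  apply: eq_bigr => D _; case: (Q D) => /=.
    rewrite -(part_b p D); apply: eq_bigr => G _.
    rewrite big_mkcond [RHS]big_mkcond; apply: eq_bigr => B _.
    by rewrite andbT; case: (B \subset backs G).
  by rewrite big1 // => G _; rewrite big1 // => B _; rewrite andbF.
rewrite exchange_big /=; apply: eq_bigr => G _.
rewrite exchange_big /=; apply: eq_bigr => B _.
rewrite (bigD1 (coupled G B)) //= eqxx /= big1 ?addr0 // => D HD.
by rewrite eq_sym (negbTE HD).
Qed.

Lemma part_c (R : realFieldType) n (p : R) (G0 : {set 'I_n * 'I_n}) :
  \sum_(B : {set 'I_n * 'I_n} | B \subset backs G0) ulaw p G0 * bweight p G0 B = ulaw p G0.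
Proof. by rewrite -big_distrr /= /bweight sum_subsets mulr1. Qed.

Lemma sum_if (R : realFieldType) n (p : R) (G : {set 'I_n * 'I_n})
    (P : pred {set 'I_n * 'I_n}) (b : bool) :
  (forall B : {set 'I_n * 'I_n}, B \subset backs G -> P B = b) ->
  \sum_(B : {set 'I_n * 'I_n} | B \subset backs G) (if P B then ulaw p G * bweight p G B else 0)
  = if b then ulaw p G else 0.
Proof.
move=> HP.
rewrite (eq_bigr (fun B : {set 'I_n * 'I_n} => if b then ulaw p G * bweight p G B else 0)); last first.
  by move=> B sB; rewrite HP.
by clear HP; case: b; [exact: part_c | rewrite big1].
Qed.

Lemma sum_zero (R : realFieldType) n (p : R) (G : {set 'I_n * 'I_n})
    (P : pred {set 'I_n * 'I_n}) :
  ~~ (G \subset upper n) ->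
  \sum_(B : {set 'I_n * 'I_n} | B \subset backs G) (if P B then ulaw p G * bweight p G B else 0) = 0.
Proof.
move=> sG; rewrite big1 // => B _; rewrite /ulaw (negbTE sG) mul0r.
by case: (P B).
Qed.

Unset Implicit Arguments.
Theorem proposition2p1 (R : realFieldType) (n : nat) (p : R) :
  0 <= p -> p <= 1 ->
  (forall F : {set 'I_n * 'I_n},
     \sum_(D : {set 'I_n * 'I_n} | forestD D == F) dlaw p D
   = \sum_(G : {set 'I_n * 'I_n} | forestU G == F) ulaw p G)
  /\
  (forall H : {set 'I_n * 'I_n},
     \sum_(D : {set 'I_n * 'I_n} | fwd D == H) dlaw p D = ulaw p H)
  /\
  ((forall G B : {set 'I_n * 'I_n},
      G \subset upper n -> B \subset backs G -> fwd (coupled G B) = G)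
   /\
   (forall D0 : {set 'I_n * 'I_n},
      \sum_(G : {set 'I_n * 'I_n})
        \sum_(B : {set 'I_n * 'I_n} | (B \subset backs G) && (coupled G B == D0))
          ulaw p G * bweight p G B
      = dlaw p D0)
   /\
   (forall G0 : {set 'I_n * 'I_n},
      \sum_(B : {set 'I_n * 'I_n} | B \subset backs G0) ulaw p G0 * bweight p G0 B
      = ulaw p G0)).
Proof.
move=> _ _.
split.
  move=> F; rewrite (transfer p (fun D => forestD D == F)) [RHS]big_mkcond.
  apply: eq_bigr => G _.
  case: (boolP (G \subset upper n)) => sG; last first.
    by rewrite sum_zero // /ulaw (negbTE sG); case: ifP.
  apply: sum_if => B sB /=.
  by rewrite /forestD /forestU /dfs_forest trace_coupled.
split.
  move=> H; rewrite (transfer p (fun D => fwd D == H)).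
  transitivity (\sum_(G : {set 'I_n * 'I_n}) (if G == H then ulaw p G else 0)); last first.
    by rewrite -big_mkcond big_pred1_eq.
  apply: eq_bigr => G _.
  case: (boolP (G \subset upper n)) => sG; last first.
    by rewrite sum_zero // /ulaw (negbTE sG); case: ifP.
  apply: sum_if => B sB /=.
  by rewrite fwd_coupled.
split; first exact: fwd_coupled.
split; first exact: part_b.
exact: part_c.
Qed.
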